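(* Let $Y\subset\mathbb{P}^m_\mathbb{Q}$ be a smooth geometrically integral projective variety with $Y(\mathbb{A}_\mathbb{Q})\neq\emptyset$ and let $\mathcal{Y}\subset\mathbb{P}^m_\mathbb{Z}$ be a $\mathbb{Z}$-integral model. Let $\mathcal{E}_f\subset Y(\mathbb{A}^f_\mathbb{Q})$ be non-empty and open-closed with $\mathcal{E}_f\ne Y(\mathbb{A}^f_\mathbb{Q})$, and let $\mathcal{E}_f^c=Y(\mathbb{A}^f_\mathbb{Q})\setminus\mathcal{E}_f$. Then $\mathcal{L}(\mathcal{E}_f^c)=\mathcal{L}(\mathcal{E}_f)$.
   Context: $Y(\mathbb{A}^f_\mathbb{Q})=\prod_pY(\mathbb{Q}_p)=\prod_p\mathcal{Y}(\mathbb{Z}_p)$. For $l\ge1$ and $\xi=(\xi_p)_{p\mid l}$ with $\xi_p=[\xi_{p,0}:\dots:\xi_{p,m}]\in Y(\mathbb{Q}_p)$, $\xi_{p,i}\in\mathbb{Z}_p$ not all in $p\mathbb{Z}_p$, set $\mathcal{E}_p(l;\xi_p)=Y(\mathbb{Q}_p)\cap\{[\zeta_0:\dots:\zeta_m]:\zeta_i\in\xi_{p,i}+p^{\mathrm{ord}_p(l)}\mathbb{Z}_p\ \forall i\}$; the projective congruence neighbourhood of level $l$ associated to $\xi$ is $\mathcal{E}_f(l;\xi)=\prod_{p\mid l}\mathcal{E}_p(l;\xi_p)\times\prod_{p\nmid l}\mathcal{Y}(\mathbb{Z}_p)$ (when non-empty). For non-empty open-closed $\mathcal{E}\subset Y(\mathbb{A}^f_\mathbb{Q})$,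 the covering exponent $\mathcal{L}(\mathcal{E})$ is the smallest integer $l$ such that $\mathcal{E}$ is a finite disjoint union of projective congruence neighbourhoods all of level $l$. *)

(* Defs.v *)
From mathcomp Require Import all_boot all_order all_algebra all_field.
From mathcomp Require Import mpoly.
From mathcomp Require Import Rstruct.

Set Implicit Arguments.
Unset Strict Implicit.
Unset Printing Implicit Defensive.

Import GRing.Theory Num.Theory.
Local Open Scope ring_scope.

(* The projective variety Y ⊂ P^m_Q is given by a finite list F of           *)
(* homogeneous polynomials with integer coefficients in x_0..x_m,            *)
(* Y = Proj Q[x_0..x_m]/(F).                                                 *)

Definition homog_sys (m : nat) (F : seq {mpoly int[m.+1]}) : Prop :=
  forall f, f \in F -> exists d : nat, f \is d.-homog.

(* base change to Qbar = algC *)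
Definition toC (m : nat) (f : {mpoly int[m.+1]}) : {mpoly algC[m.+1]} :=
  map_mpoly (fun z : int => z%:~R) f.

Definition idealC (m : nat) (F : seq {mpoly int[m.+1]}) (g : {mpoly algC[m.+1]}) : Prop :=
  exists h : 'I_(size F) -> {mpoly algC[m.+1]},
    g = \sum_(i < size F) h i * toC (nth 0 F i).

(* its saturation with respect to the irrelevant ideal (x_0,...,x_m):
   the homogeneous ideal of Y_Qbar *)
Definition satC (m : nat) (F : seq {mpoly int[m.+1]}) (g : {mpoly algC[m.+1]}) : Prop :=
  forall i : 'I_(m.+1), exists N : nat, idealC F ('X_i ^+ N * g).

(* Y is geometrically integral (in particular non-empty): the homogeneous
   ideal of Y_Qbar is a prime ideal of Qbar[x]. *)
Definition geom_integral (m : nat) (F : seq {mpoly int[m.+1]}) : Prop :=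
  ~ satC F 1 /\ forall g h, satC F (g * h) -> satC F g \/ satC F h.

Definition prime_idealC (m : nat) (Q : {mpoly algC[m.+1]} -> Prop) : Prop :=
  [/\ Q 0, (forall a b, Q a -> Q b -> Q (a + b)),
      (forall a b, Q b -> Q (a * b)), ~ Q 1 &
      (forall a b, Q (a * b) -> Q a \/ Q b)].

Definition prime_chain (m : nat) (F : seq {mpoly int[m.+1]}) (n : nat) : Prop :=
  exists Q : nat -> {mpoly algC[m.+1]} -> Prop,
    [/\ (forall g, Q 0%N g <-> satC F g),
        (forall i, (i <= n)%N -> prime_idealC (Q i)) &
        (forall i, (i < n)%N ->
           (forall g, Q i g -> Q i.+1 g) /\ exists g, Q i.+1 g /\ ~ Q i g)].

(* Krull dimension D of the homogeneous coordinate ring Qbar[x]/I(Y)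
   (the affine cone over Y; dim Y = D - 1) *)
Definition cone_dim (m : nat) (F : seq {mpoly int[m.+1]}) (D : nat) : Prop :=
  prime_chain F D /\ ~ prime_chain F D.+1.

Definition jac_rank_ge (m : nat) (F : seq {mpoly int[m.+1]})
    (a : 'I_(m.+1) -> algC) (r : nat) : Prop :=
  exists G : 'I_r -> {mpoly algC[m.+1]},
    (forall i, satC F (G i)) /\
    \rank (\matrix_(i < r, j < m.+1) (mderiv j (G i)).@[a]) = r.

(* Y is smooth (Jacobian criterion on the affine cone, away from 0):
   at every Qbar-point the Jacobian of I(Y) has rank equal to the codimension
   (m+1) - D of the cone. *)
Definition smooth (m : nat) (F : seq {mpoly int[m.+1]}) : Prop :=
  exists D : nat, cone_dim F D /\
    forall a : 'I_(m.+1) -> algC, (exists i, a i != 0) ->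
      (forall g, satC F g -> g.@[a] = 0) ->
      jac_rank_ge F a (m.+1 - D) /\ ~ jac_rank_ge F a (m.+2 - D).

Definition real_point (m : nat) (F : seq {mpoly int[m.+1]}) : Prop :=
  exists a : 'I_(m.+1) -> Rdefinitions.R, (exists i, a i <> 0) /\
    forall f, f \in F -> (map_mpoly (fun z : int => z%:~R) f).@[a] = 0.

(* p-adic integers: a p-adic integer is the compatible sequence of its       *)
(* residues a k = (a mod p^k) in [0, p^k).                                   *)
Definition is_zp (p : nat) (a : nat -> nat) : Prop :=
  forall k, (a k < p ^ k)%N /\ (a k.+1 %% p ^ k)%N = a k.

(* a vector of m+1 p-adic integers *)
Definition Vec (m : nat) := 'I_(m.+1) -> nat -> nat.

(* f(v) = 0 in Z_p, i.e. f(v) = 0 mod p^k for every k *)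
Definition vanish (m : nat) (p : nat) (f : {mpoly int[m.+1]}) (v : Vec m) : Prop :=
  forall k, ((p ^ k)%:Z %| f.@[fun i => (v i k)%:Z])%Z.

(* normalized representative of a point of P^m(Q_p): primitive vector whose
   first unit coordinate equals 1 (every point has exactly one) *)
Definition normalized (m : nat) (p : nat) (v : Vec m) : Prop :=
  exists i0 : 'I_(m.+1),
    (forall j : 'I_(m.+1), (j < i0)%N -> v j 1%N = 0%N) /\
    forall k, v i0 k = (1 %% p ^ k)%N.

(* v is (the normalized representative of) a point of Y(Q_p) = 𝒴(Z_p) *)
Definition Ypt (m : nat) (F : seq {mpoly int[m.+1]}) (p : nat) (v : Vec m) : Prop :=
  [/\ (forall i, is_zp p (v i)), normalized p v &
      forall f, f \in F -> vanish p f v].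

Definition adelic_nonempty (m : nat) (F : seq {mpoly int[m.+1]}) : Prop :=
  real_point F /\ forall p, prime p -> exists v, Ypt F p v.

(* points of Y(A^f_Q) = prod_p Y(Q_p); the component at a non-prime index is
   a dummy fixed to 0 *)
Definition Af (m : nat) (F : seq {mpoly int[m.+1]}) (x : nat -> Vec m) : Prop :=
  forall p, (prime p -> Ypt F p (x p)) /\ (~~ prime p -> x p = fun _ _ => 0%N).

(* projective congruence neighbourhood E_f(l; xi) (l >= 1): for p | l the
   point x_p has a representative zeta = u * x_p (u a p-adic unit) with
   zeta_i = xi_{p,i} mod p^(ord_p l) for all i *)
Definition Nbhd (m : nat) (F : seq {mpoly int[m.+1]}) (l : nat)
    (xi : nat -> Vec m) (x : nat -> Vec m) : Prop :=
  Af F x /\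
  forall p, prime p -> (p %| l)%N ->
    exists u, [/\ is_zp p u, u 1%N != 0%N &
      forall i, ((u (logn p l) * x p i (logn p l)) %% p ^ (logn p l))%N
                = xi p i (logn p l)].

Definition center (m : nat) (F : seq {mpoly int[m.+1]}) (l : nat) (xi : nat -> Vec m) : Prop :=
  forall p, prime p -> (p %| l)%N -> Ypt F p (xi p).

Definition covered_at (m : nat) (F : seq {mpoly int[m.+1]})
    (E : (nat -> Vec m) -> Prop) (l : nat) : Prop :=
  (0 < l)%N /\
  exists (n : nat) (xis : 'I_n -> nat -> Vec m),
    [/\ (forall j, center F l (xis j)),
        (forall j j', j != j' -> forall x, ~ (Nbhd F l (xis j) x /\ Nbhd F l (xis j') x)) &
        (forall x, E x <-> exists j, Nbhd F l (xis j) x)].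

(* "L(E) = l": l is the covering exponent of E *)
Definition cov_exp (m : nat) (F : seq {mpoly int[m.+1]})
    (E : (nat -> Vec m) -> Prop) (l : nat) : Prop :=
  covered_at F E l /\ forall l', covered_at F E l' -> (l <= l')%N.

(* topology of Y(A^f_Q) (restricted = full product of the compact Y(Q_p)):
   the congruence neighbourhoods E_f(l; x), l >= 1, form a neighbourhood base at x *)
Definition open_in (m : nat) (F : seq {mpoly int[m.+1]}) (U : (nat -> Vec m) -> Prop) : Prop :=
  forall x, U x -> exists l, (0 < l)%N /\ forall y, Nbhd F l x y -> U y.

Definition complementA (m : nat) (F : seq {mpoly int[m.+1]}) (E : (nat -> Vec m) -> Prop) :=
  fun x => Af F x /\ ~ E x.

Definition clopen (m : nat) (F : seq {mpoly int[m.+1]}) (E : (nat -> Vec m) -> Prop) : Prop :=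
  [/\ (forall x, E x -> Af F x), open_in F E & open_in F (complementA F E)].

(* Main.v *)
Require Import Defs.
From mathcomp Require Import all_boot all_order all_algebra all_field.
From mathcomp Require Import mpoly.
From mathcomp Require Import Rstruct.
From Stdlib Require Import Classical ClassicalEpsilon.

Lemma zp_mod {p a} : prime p -> is_zp p a -> forall j k, (j <= k)%N -> a k %% p ^ j = a j.
Proof.
move=> pp za j k; elim: k => [|k IH] le.
  rewrite leqn0 in le; move/eqP: le => ->; rewrite modn_small //; exact: (za 0%N).1.
rewrite leq_eqVlt in le; case/orP: le => [/eqP ->|le].
  rewrite modn_small //; exact: (za k.+1).1.
rewrite -(modn_dvdm _ (dvdn_exp2l p (le : (j <= k)%N))) (za k).2 IH //.
Qed.

Lemma key {m} {F : seq {mpoly int[m.+1]}} {p k v w} : prime p -> (0 < k)%N ->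
  Ypt F p v -> Ypt F p w ->
  (exists u, [/\ is_zp p u, u 1%N != 0%N &
      forall i, ((u k * v i k) %% p ^ k)%N = w i k]) <-> forall i, v i k = w i k.
Proof.
move=> pp k0 [zv [i0 [hv0 hv1]] _] [zw [i1 [hw0 hw1]] _].
have p1 : (1 < p ^ 1)%N by rewrite expn1 prime_gt1.
have m1 : (1 %% p ^ 1 = 1)%N by rewrite modn_small.
split.
  case=> u [zu u1 H].
  have modp : forall i, w i 1%N = (u 1%N * v i 1%N) %% p ^ 1.
    move=> i; rewrite -(zp_mod pp (zw i) 1 k k0) -H (modn_dvdm _ (dvdn_exp2l p k0)).
    by rewrite -modnMm (zp_mod pp zu 1 k k0) (zp_mod pp (zv i) 1 k k0).
  have u1p : (u 1%N < p ^ 1)%N := (zu 1%N).1.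
  have ei : i0 = i1.
    case: (ltngtP i0 i1) => [lt|lt|/val_inj //].
      have := hw0 _ lt; rewrite modp hv1 m1 muln1 modn_small //; by move/eqP: u1.
    have := hv0 _ lt => e; have := hw1 1%N; rewrite modp e muln0 mod0n m1 //.
  subst i1.
  have uk : u k %% p ^ k = 1 %% p ^ k.
    by rewrite -hw1 -H hv1 modnMmr muln1.
  move=> i; rewrite -H -modnMml uk modnMml mul1n modn_small //; exact: (zv i k).1.
move=> E; exists (fun k => 1 %% p ^ k); split.
- move=> j; split; first by rewrite ltn_mod expn_gt0 prime_gt0.
  exact: (modn_dvdm _ (dvdn_exp2l p (leqnSn j))).
- by rewrite m1.
- by move=> i; rewrite modnMml mul1n modn_small E //; exact: (zw i k).1.
Qed.

Lemma Nbhd_iff {m} {F : seq {mpoly int[m.+1]}} {l xi x} : (0 < l)%N -> center F l xi ->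
  Nbhd F l xi x <-> Af F x /\ forall p, prime p -> (p %| l)%N ->
     forall i, x p i (logn p l) = xi p i (logn p l).
Proof.
move=> l0 cen; split.
  case=> ax H; split=> // p pp pl.
  have k0 : (0 < logn p l)%N by rewrite logn_gt0 mem_primes pp l0 pl.
  apply/(key pp k0 ((ax p).1 pp) (cen p pp pl)); exact: H.
case=> ax H; split=> // p pp pl.
have k0 : (0 < logn p l)%N by rewrite logn_gt0 mem_primes pp l0 pl.
apply/(key pp k0 ((ax p).1 pp) (cen p pp pl)); exact: H.
Qed.

Definition data {m} l (x : nat -> Vec m) : {ffun 'I_l.+1 * 'I_m.+1 -> 'I_l.+1} :=
  [ffun q : 'I_l.+1 * 'I_m.+1 => inord (if prime q.1 && (q.1 %| l)%N then x (val q.1) q.2 (logn q.1 l) else 0%N)].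

Lemma bound m (F : seq {mpoly int[m.+1]}) l x p i : (0 < l)%N -> Af F x -> prime p ->
  (p %| l)%N -> (x p i (logn p l) < l.+1)%N.
Proof.
move=> l0 ax pp pl; have [zv _ _] := (ax p).1 pp.
apply: (leq_trans (zv i _).1); apply: leqW; exact: dvdn_leq l0 (pfactor_dvdnn p l).
Qed.

Lemma dataP {m} {F : seq {mpoly int[m.+1]}} {l x y} : (0 < l)%N -> Af F x -> Af F y ->
  data l x = data l y <-> forall p, prime p -> (p %| l)%N ->
     forall i, x p i (logn p l) = y p i (logn p l).
Proof.
move=> l0 ax ay; split.
  move=> e p pp pl i; have pl1 : (p < l.+1)%N by rewrite ltnS dvdn_leq.
  have := congr1 (fun f : {ffun 'I_l.+1 * 'I_m.+1 -> 'I_l.+1} => val (f (Ordinal pl1, i))) e.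
  rewrite !ffunE /= pp pl /= !inordK //; exact: bound.
move=> H; apply/ffunP => -[q i]; rewrite !ffunE /=; case: ifP => // /andP [pp pl].
by rewrite H.
Qed.

Definition pb (P : Prop) : bool := if excluded_middle_informative P then true else false.
Lemma pbE (P : Prop) : pb P <-> P.
Proof. by rewrite /pb; case: excluded_middle_informative. Qed.

Lemma cov_compl {m} {F : seq {mpoly int[m.+1]}} {E : (nat -> Vec m) -> Prop} {l} :
  (forall x, E x -> Af F x) -> covered_at F E l -> covered_at F (complementA F E) l.
Proof.
move=> sub [l0 [n [xis [cen disj cov]]]]; split=> //.
set C := complementA F E.
pose rep d : nat -> Vec m :=
  match excluded_middle_informative (exists x, C x /\ data l x = d) with
  | left h => proj1_sig (constructive_indefinite_description _ h)
  | right _ => fun (_ : nat) (_ : 'I_m.+1) (_ : nat) => 0%N end.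
pose S := [set d | pb (exists x, C x /\ data l x = d)].
have repP d : d \in S -> C (rep d) /\ data l (rep d) = d.
  rewrite inE => /pbE h; rewrite /rep; case: excluded_middle_informative => // h'.
  exact: (proj2_sig (constructive_indefinite_description _ h')).
have cenC x : C x -> center F l x by case=> ax _ p pp _; exact: (ax p).1.
exists #|S|, (fun j => rep (enum_val j)); split.
- move=> j; have [c _] := repP _ (enum_valP j); exact: cenC c.
- move=> j j' ne z [].
  have [c1 d1] := repP _ (enum_valP j); have [c2 d2] := repP _ (enum_valP j').
  move=> /(Nbhd_iff l0 (cenC _ c1)) [az h1] /(Nbhd_iff l0 (cenC _ c2)) [_ h2].
  move/negP: ne; apply; apply/eqP/enum_val_inj; rewrite -d1 -d2.
  apply/(dataP l0 c1.1 c2.1) => p pp pl i; by rewrite -h1 // h2.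
- move=> x; split.
    move=> cx; have dS : data l x \in S by rewrite inE; apply/pbE; exists x.
    exists (enum_rank_in dS (data l x)); rewrite enum_rankK_in //.
    have [c1 d1] := repP _ dS.
    apply/(Nbhd_iff l0 (cenC _ c1)); split; first exact: cx.1.
    by apply/(dataP l0 cx.1 c1.1); rewrite d1.
  case=> j; have [c1 d1] := repP _ (enum_valP j).
  move=> /(Nbhd_iff l0 (cenC _ c1)) [ax h]; split=> // ex.
  have [j0 /(Nbhd_iff l0 (cen j0)) [_ h0]] := (cov x).1 ex.
  apply: c1.2; apply/cov; exists j0; apply/(Nbhd_iff l0 (cen j0)); split.
    exact: c1.1.
  by move=> p pp pl i; rewrite -h0 // h.
Qed.

Lemma covered_ext {m} {F : seq {mpoly int[m.+1]}} {E1 E2 : (nat -> Vec m) -> Prop} {l} :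
  (forall x, E1 x <-> E2 x) -> covered_at F E1 l -> covered_at F E2 l.
Proof.
move=> e [l0 [n [xis [cen disj cov]]]]; split=> //; exists n, xis; split=> // x.
by rewrite -e.
Qed.

Theorem lemma2p10 (m : nat) (F : seq {mpoly int[m.+1]}) (E : (nat -> Vec m) -> Prop) :
  homog_sys F -> geom_integral F -> smooth F -> adelic_nonempty F ->
  clopen F E -> (exists x, E x) -> (exists x, complementA F E x) ->
  forall l : nat, cov_exp F (complementA F E) l <-> cov_exp F E l.
Proof.
move=> _ _ _ _ [sub _ _] _ _ l.
have cc : forall x, complementA F (complementA F E) x <-> E x.
  move=> x; split.
    case=> ax h; apply: NNPP => ne; apply: h; by split.
  move=> ex; split; [exact: sub | by case].
have subC : forall x, complementA F E x -> Af F x by move=> x [].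
have A l' : covered_at F E l' -> covered_at F (complementA F E) l' := cov_compl sub.
have B l' : covered_at F (complementA F E) l' -> covered_at F E l' :=
  fun h => covered_ext cc (cov_compl subC h).
split; case=> h1 h2; split; [exact: B | move=> l2 h3; apply: h2; exact: A | exact: A | move=> l2 h3; apply: h2; exact: B].
Qed.
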